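(* Let $a, b$ be integers with $0 < a \le b$ and let $L_{a,b} = \{C_{i,1} : 1 \le i \le a+1\} \cup \{C_{1,j} : 1 < j \le b+1\}$, of size $n = a+b+1$. Then on the $n \times n$ board, $\mathrm{cp}_{\mathrm{free}}(L_{a,b}) \ge 2$.
   Context: For integers $i,j$, $C_{i,j}$ denotes the unit square cell in column $i$ and row $j$ of the integer grid (columns numbered left to right, rows numbered top to bottom). A polyomino is a finite set of cells; its size is its number of cells. For a polyomino $\mathcal{P}$ of size $n$ the board is $\mathbb{B} = \{C_{i,j} : 1 \le i,j \le n\}$. The shift of $\mathcal{P}$ by integers $(c,d)$ is $\mathcal{P}+(c,d) = \{C_{x+c,y+d} : C_{x,y} \in \mathcal{P}\}$. The rotations of $L_{a,b}$ by $90^\circ, 180^\circ, 270^\circ$ clockwise are $LR_{a,b} = \{C_{i,1} : 1 \le i \le b+1\} \cup \{C_{b+1,j} : 1 \le j \le a+1\}$, $LR^2_{a,b} = \{C_{i,b+1} : 1 \le i \le a+1\} \cup \{C_{a+1,j} : 1 \le j \le b+1\}$, $LR^3_{a,b} = \{C_{i,a+1} : 1 \le i \le b+1\} \cup \{C_{1,j} : 1 \le j \le a+1\}$ (reflections are not allowed). A free copy of $L_{a,b}$ is any shift of $L_{a,b}$, $LR_{a,b}$, $LR^2_{a,b}$ or $LR^3_{a,b}$. A set of polyominoes is a valid arrangement if each is contained in $\mathbb{B}$ and they are pairwise disjoint. A free packing of $\mathcal{P}$ is a set of free copies of $\mathcal{P}$ forming a valid arrangement such that adding any further free copy of $\mathcal{P}$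 yields an invalid arrangement. The clumsy free packing number $\mathrm{cp}_{\mathrm{free}}(\mathcal{P})$ is the minimum number of polyominoes in a free packing of $\mathcal{P}$ on the $n \times n$ board. *)

(* Defs.v *)
From Stdlib Require Import ZArith List.
Open Scope Z_scope.

(* A cell C_{i,j} is the pair (i, j) : Z * Z (column i, row j). *)
Definition cell := (Z * Z)%type.

Definition poly := cell -> Prop.

Definition L (a b : Z) : poly := fun z =>
  let (x, y) := z in (y = 1 /\ 1 <= x <= a + 1) \/ (x = 1 /\ 1 < y <= b + 1).

Definition LR (a b : Z) : poly := fun z =>
  let (x, y) := z in (y = 1 /\ 1 <= x <= b + 1) \/ (x = b + 1 /\ 1 <= y <= a + 1).

Definition LR2 (a b : Z) : poly := fun z =>
  let (x, y) := z in (y = b + 1 /\ 1 <= x <= a + 1) \/ (x = a + 1 /\ 1 <= y <= b + 1).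

Definition LR3 (a b : Z) : poly := fun z =>
  let (x, y) := z in (y = a + 1 /\ 1 <= x <= b + 1) \/ (x = 1 /\ 1 <= y <= a + 1).

Definition shift (P : poly) (c d : Z) : poly := fun z =>
  let (x, y) := z in P (x - c, y - d).

Inductive orient := O0 | O1 | O2 | O3.

Definition rot (a b : Z) (o : orient) : poly :=
  match o with O0 => L a b | O1 => LR a b | O2 => LR2 a b | O3 => LR3 a b end.

Definition copy := (orient * Z * Z)%type.

Definition cells (a b : Z) (q : copy) : poly :=
  let '(o, c, d) := q in shift (rot a b o) c d.

Definition board (n : Z) : poly := fun z =>
  let (x, y) := z in 1 <= x <= n /\ 1 <= y <= n.

Definition in_board (n : Z) (P : poly) : Prop := forall z, P z -> board n z.

Definition disjoint (P Q : poly) : Prop := forall z, ~ (P z /\ Q z).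

(* A free packing: a (finite) family of free copies, listed without
   repetition (guaranteed by pairwise disjointness of nonempty copies),
   each contained in the board, pairwise disjoint, and such that no further
   free copy can be added (every free copy inside the board meets one). *)
Definition free_packing (a b : Z) (s : list copy) : Prop :=
  let n := a + b + 1 in
  (forall q, In q s -> in_board n (cells a b q)) /\
  (forall (i j : nat), (i < j)%nat -> (j < length s)%nat ->
     disjoint (cells a b (nth i s (O0, 0, 0))) (cells a b (nth j s (O0, 0, 0)))) /\
  (forall q : copy, in_board n (cells a b q) ->
     exists p, In p s /\ ~ disjoint (cells a b p) (cells a b q)).

(* Main.v *)
Require Import Defs.
From Stdlib Require Import ZArith List Lia.
Open Scope Z_scope.

Ltac unf := cbv [cells Defs.shift rot L LR LR2 LR3 board in_board disjoint] in *.

Ltac solve_q := unf; split;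
  [intros [x y] Hq; lia | intros [x y] [H1 H2]; lia].

Ltac try_all a b c d :=
  first
  [ exists (O0, c+1, d+1); solve_q | exists (O0, c-1, d-1); solve_q
  | exists (O1, c-1, d+1); solve_q | exists (O1, c+1, d-1); solve_q
  | exists (O2, c-1, d-1); solve_q | exists (O2, c+1, d+1); solve_q
  | exists (O3, c+1, d-1); solve_q | exists (O3, c-1, d+1); solve_q
  | exists (O0, 0, 0); solve_q | exists (O0, b, 0); solve_q
  | exists (O0, 0, a); solve_q | exists (O0, b, a); solve_q
  | exists (O2, 0, 0); solve_q | exists (O2, b, 0); solve_q
  | exists (O2, 0, a); solve_q | exists (O2, b, a); solve_q
  | exists (O1, 0, 0); solve_q | exists (O1, a, 0); solve_q
  | exists (O1, 0, b); solve_q | exists (O1, a, b); solve_q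
  | exists (O3, 0, 0); solve_q | exists (O3, a, 0); solve_q
  | exists (O3, 0, b); solve_q | exists (O3, a, b); solve_q ].

Lemma key (a b : Z) (hab : 0 < a <= b) (p : copy) :
  in_board (a+b+1) (cells a b p) ->
  exists q, in_board (a+b+1) (cells a b q) /\ disjoint (cells a b p) (cells a b q).
Proof.
  destruct p as [[o c] d]; intro H.
  destruct o.
  - pose proof (H (c+1,d+1)); pose proof (H (c+a+1,d+1)); pose proof (H (c+1,d+b+1)).
    unf. 
    assert (0 <= c <= b /\ 0 <= d <= a) by (repeat match goal with
      | h : ?P -> _ |- _ => specialize (h ltac:(lia)) end; lia); clear -hab H3 H;
    destruct (Z.eq_dec c 0); destruct (Z.eq_dec c b); destruct (Z.eq_dec d 0); destruct (Z.eq_dec d a);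
      try lia; try_all a b c d.
  - pose proof (H (c+1,d+1)); pose proof (H (c+b+1,d+1)); pose proof (H (c+b+1,d+a+1)).
    unf.
    assert (0 <= c <= a /\ 0 <= d <= b) by (repeat match goal with
      | h : ?P -> _ |- _ => specialize (h ltac:(lia)) end; lia); clear -hab H3 H;
    destruct (Z.eq_dec c 0); destruct (Z.eq_dec c a); destruct (Z.eq_dec d 0); destruct (Z.eq_dec d b);
      try lia; try_all a b c d.
  - pose proof (H (c+1,d+b+1)); pose proof (H (c+a+1,d+b+1)); pose proof (H (c+a+1,d+1)).
    unf.
    assert (0 <= c <= b /\ 0 <= d <= a) by (repeat match goal with
      | h : ?P -> _ |- _ => specialize (h ltac:(lia)) end; lia); clear -hab H3 H;
    destruct (Z.eq_dec c 0); destruct (Z.eq_dec c b); destruct (Z.eq_dec d 0); destruct (Z.eq_dec d a);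
      try lia; try_all a b c d.
  - pose proof (H (c+1,d+a+1)); pose proof (H (c+b+1,d+a+1)); pose proof (H (c+1,d+1)).
    unf.
    assert (0 <= c <= a /\ 0 <= d <= b) by (repeat match goal with
      | h : ?P -> _ |- _ => specialize (h ltac:(lia)) end; lia); clear -hab H3 H;
    destruct (Z.eq_dec c 0); destruct (Z.eq_dec c a); destruct (Z.eq_dec d 0); destruct (Z.eq_dec d b);
      try lia; try_all a b c d.
Qed.

Theorem lemma1 (a b : Z) (hab : 0 < a <= b) (s : list copy) :
  free_packing a b s -> (2 <= length s)%nat.
Proof.
  intros [Hin [_ Hmax]].
  destruct s as [|p [|p' s]]; simpl; try lia.
  - destruct (Hmax (O0, 0, 0)) as [p [[] _]].
    unf; intros [x y] Hq; lia.
  - destruct (key a b hab p (Hin p (or_introl eq_refl))) as [q [Hq Hd]].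
    destruct (Hmax q Hq) as [p1 [[<-|[]] Hn]].
    exact (False_ind _ (Hn Hd)).
Qed.
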